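(* Let $G=(V,E)$ be a directed graph with $|V|=n$ vertices, and let $W\subseteq V$ be a set of vertices whose minimal dominating set has size $k$. Then $W$ contains an independent set $U$ of size at least $\tfrac{1}{50}k/\ln n$ with the property that every vertex $v\in V$ dominates at most $\ln n$ vertices of $U$, i.e. $|N^{\mathrm{out}}(v)\cap U|\le\ln n$ for all $v\in V$.
   Context: For a directed graph $G=(V,E)$ (self-loops allowed), $N^{\mathrm{out}}(v)=\{w:(v,w)\in E\}$; a vertex $v$ dominates $w$ if $w\in N^{\mathrm{out}}(v)$. A dominating set of $W\subseteq V$ is a set $D\subseteq V$ such that every $w\in W$ is dominated by some $d\in D$; ''the minimal dominating set of $W$ has size $k$'' means the smallest such $D$ has $|D|=k$. An independent set is a set $S$ such that $(u,v)\notin E$ for all distinct $u,v\in S$. *)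

(* Defs.v *)
From mathcomp Require Import all_boot all_order all_algebra.
From mathcomp Require Import reals exp.
Set Implicit Arguments. Unset Strict Implicit. Unset Printing Implicit Defensive.

(* A directed graph on V is an edge relation e : rel V (self-loops allowed). *)
Definition Nout (V : finType) (e : rel V) (v : V) : {set V} := [set w | e v w].

Definition dominates (V : finType) (e : rel V) (D W : {set V}) : Prop :=
  forall w, w \in W -> exists2 d, d \in D & e d w.

Definition min_dom_size (V : finType) (e : rel V) (W : {set V}) (k : nat) : Prop :=
  (exists D : {set V}, dominates e D W /\ #|D| = k) /\
  (forall D : {set V}, dominates e D W -> k <= #|D|).

Definition independent (V : finType) (e : rel V) (S : {set V}) : Prop :=
  forall u v, u \in S -> v \in S -> u != v -> ~~ e u v.

(* Main.v *)
Require Import Defs.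
From mathcomp Require Import all_boot all_order all_algebra.
From mathcomp Require Import reals exp sequences.
From mathcomp Require Import ring lra zify.
Import Order.TTheory GRing.Theory Num.Theory.
Local Open Scope ring_scope.

Lemma expR1_le3 (R : realType) : expR 1 <= 3 :> R.
Proof.
have h1 : 7/8 <= expR (- (1/8)) :> R.
  by apply: le_trans (expR_ge1Dx _); lra.
have h2 : expR (1/8) <= 8/7 :> R.
  rewrite expRN in h1.
  have hp := expR_gt0 (1/8 : R).
  rewrite -(ler_pM2r hp) in h1.
  rewrite mulVf ?gt_eqF // in h1.
  lra.
have -> : expR (1 : R) = expR (1/8) ^+ 8.
  by rewrite -expRM_natl; congr expR; field.
apply: (@le_trans _ _ ((8/7 : R) ^+ 8)).
  by apply: lerXn2r; rewrite ?nnegrE ?expR_ge0 //; lra.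
have e2 : (8/7 : R) ^+ 2 <= 131/100 by rewrite expr2; lra.
have e4 : (8/7 : R) ^+ 4 <= 172/100.
  have -> : (8/7 : R) ^+ 4 = ((8/7) ^+ 2) ^+ 2 by rewrite -exprM.
  apply: (@le_trans _ _ ((131/100 : R) ^+ 2)); last by rewrite expr2; lra.
  by apply: lerXn2r; rewrite ?nnegrE ?exprn_ge0 //; lra.
have -> : (8/7 : R) ^+ 8 = ((8/7) ^+ 4) ^+ 2 by rewrite -exprM.
apply: (@le_trans _ _ ((172/100 : R) ^+ 2)); last by rewrite expr2; lra.
by apply: lerXn2r; rewrite ?nnegrE ?exprn_ge0 //; lra.
Qed.

Section Cover.
Variables (R : realType) (V : finType) (e : rel V).

Lemma card_filter (U : {set V}) (P : pred V) :
  #|[set w in U | P w]| = (\sum_(w in U) (P w : nat))%N.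
Proof.
rewrite -sum1_card (eq_bigl (fun w => (w \in U) && P w)); last first.
  by move=> w; rewrite inE.
by rewrite big_mkcondr /=; apply: eq_bigr => w _; case: (P w).
Qed.

Lemma NoutI v (U : {set V}) : Nout e v :&: U = [set w in U | e v w].
Proof. by apply/setP => w; rewrite !inE andbC. Qed.

Lemma double_count (w : V -> R) (S : {set V}) :
  \sum_v w v * (#|Nout e v :&: S|)%:R = \sum_(x in S) \sum_(v | e v x) w v.
Proof.
under eq_bigr => v _ do rewrite NoutI card_filter natr_sum mulr_sumr.
rewrite exchange_big /=; apply: eq_bigr => x _.
rewrite [RHS]big_mkcond /=; apply: eq_bigr => v _.
by case: (e v x); rewrite ?mulr1 ?mulr0.
Qed.

Lemma cover_lemma (w : V -> R) (W' : {set V}) (a : R) :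
  (0 < #|V|)%N -> (forall v, 0 < w v) -> 0 < a ->
  (forall x, x \in W' -> a * (\sum_v w v) <= \sum_(v | e v x) w v) ->
  exists D : {set V}, dominates e D W' /\
     (#|D|%:R : R) <= ln (#|V|%:R) / a + 1.
Proof.
move=> hV hw ha hs.
set Phi := \sum_v w v.
have Lge0 : 0 <= ln (#|V|%:R : R) by apply: ln_ge0; rewrite ler1n.
have Phi_gt0 : 0 < Phi.
  case/card_gt0P: hV => v0 _.
  rewrite /Phi (bigD1 v0) //=; apply: ltr_pwDl (hw v0) _.
  by apply: sumr_ge0 => i _; exact: ltW.
have [W0 | [x0 x0W]] := set_0Vmem W'.
  exists set0; split; first by move=> x; rewrite W0 inE.
  rewrite cards0; apply: addr_ge0 => //; apply: divr_ge0 => //; exact: ltW.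
have ha1 : a <= 1.
  have h := hs x0 x0W.
  have hle : \sum_(v | e v x0) w v <= Phi.
    rewrite /Phi [X in _ <= X](bigID (fun v => e v x0)) /= lerDl.
    by apply: sumr_ge0 => i _; exact: ltW.
  by have := le_trans h hle; rewrite -[X in _ <= X]mul1r ler_pM2r.
pose Rem (D : {set V}) := [set x in W' | [forall d in D, ~~ e d x]].
have claim : forall j : nat, exists D : {set V},
    (#|D| <= j)%N /\ (#|Rem D|%:R : R) <= #|W'|%:R * (1 - a) ^+ j.
  elim => [|j [D [hD hR]]].
    exists set0; split; first by rewrite cards0.
    rewrite expr0 mulr1 ler_nat.
    apply: subset_leq_card; apply/subsetP => x; rewrite inE; by case/andP.
  set S := Rem D.
  have [v hv] : exists v, a * (#|S|%:R : R) <= (#|Nout e v :&: S|)%:R.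
    case: (boolP [exists v, a * (#|S|%:R : R) <= (#|Nout e v :&: S|)%:R]).
      by case/existsP => v hv; exists v.
    rewrite negb_exists => /forallP hall; exfalso.
    have h1 : \sum_v w v * (#|Nout e v :&: S|)%:R < \sum_v w v * (a * #|S|%:R).
      apply: ltr_sum.
        by case/card_gt0P: hV => v0 _; apply/hasP; exists v0; rewrite ?mem_index_enum.
      move=> v _; rewrite ltr_pM2l //; have := hall v; by rewrite -ltNge.
    have h2 : \sum_v w v * (a * #|S|%:R) <= \sum_v w v * (#|Nout e v :&: S|)%:R.
      rewrite double_count -mulr_suml -/Phi.
      apply: (@le_trans _ _ (\sum_(x in S) (a * Phi))); last first.
        apply: ler_sum => x xS; apply: hs.
        by move: xS; rewrite inE; case/andP.
      by rewrite sumr_const -mulr_natr; rewrite le_eqVlt; apply/orP; left; apply/eqP; ring.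
    by move: (lt_le_trans h1 h2); rewrite ltxx.
  exists (v |: D); split.
    by rewrite cardsU1; case: (v \in D) => /=; lia.
  have sub : Rem (v |: D) \subset S :\: Nout e v.
    apply/subsetP => x; rewrite !inE; case/andP => xW /forall_inP hf.
    rewrite xW /=; apply/andP; split.
      by apply: hf; rewrite in_setU1 eqxx.
    by apply/forall_inP => d dD; apply: hf; rewrite in_setU1 dD orbT.
  apply: (@le_trans _ _ (#|S :\: Nout e v|%:R : R)).
    by rewrite ler_nat; apply: subset_leq_card.
  rewrite cardsD natrB; last by apply: subset_leq_card; apply: subsetIl.
  rewrite setIC exprS.
  apply: (@le_trans _ _ ((1 - a) * #|S|%:R)).
    by lra.
  rewrite mulrCA; apply: ler_wpM2l; first by lra.
  exact: hR.
pose j := (Num.truncn (ln (#|V|%:R : R) / a)).+1.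
have [D [hD hR]] := claim j.
have hj : ln (#|V|%:R : R) / a < j%:R by apply: truncnS_gt.
have Rem0 : (#|Rem D|%:R : R) < 1.
  apply: le_lt_trans hR _.
  apply: (@le_lt_trans _ _ ((#|V|%:R : R) * expR (- a) ^+ j)).
    apply: ler_pM.
    - exact: ler0n.
    - by apply: exprn_ge0; lra.
    - by rewrite ler_nat; apply: max_card.
    - apply: lerXn2r; rewrite ?nnegrE ?expR_ge0 //; first by lra.
      by apply: le_trans (expR_ge1Dx _); lra.
  rewrite -expRM_natr.
  have hlt : - a * j%:R < - ln (#|V|%:R : R).
    rewrite mulNr ltrN2 mulrC -ltr_pdivrMr //.
  have := expR_lt1 (- a * j%:R + ln (#|V|%:R : R)).
  rewrite expRD lnK; last by rewrite posrE ltr0n.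
  by move=> h; rewrite mulrC h; lra.
have RemE : Rem D = set0.
  apply/eqP; rewrite -cards_eq0; apply/eqP.
  by move: Rem0; rewrite -[1 : R]/(1%:R) ltr_nat ltnS leqn0 => /eqP.
exists D; split.
  move=> x xW.
  have : x \notin Rem D by rewrite RemE inE.
  rewrite inE xW /= negb_forall_in => /existsP [d /andP [dD hd]].
  by exists d => //; move: hd; rewrite negbK.
apply: (@le_trans _ _ (j%:R : R)); first by rewrite ler_nat.
rewrite /j -addn1 natrD lerD2r truncn_le.
by apply: divr_ge0 => //; exact: ltW.
Qed.

Local Open Scope nat_scope.
Lemma degen (t : nat) (U : {set V}) :
  (forall v, #|Nout e v :&: U| <= t) ->
  exists2 I : {set V}, I \subset U & independent e I /\ #|U| <= #|I| * (2 * t + 1).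
Proof.
move: {2}#|U| (leqnn #|U|) => m; elim: m U => [|m IH] U hU hl.
  exists set0; first exact: sub0set.
  by split; [move=> u v; rewrite inE | lia].
case: (set_0Vmem U) => [-> | [u0 u0U]].
  exists set0; first exact: sub0set.
  by split; [move=> u v; rewrite inE | rewrite cards0].
pose nbr u := [set w in U | (w != u) && (e u w || e w u)].
have sA : \sum_(u in U) #|[set w in U | e u w]| <= #|U| * t.
  rewrite -sum_nat_const; apply: leq_sum => u _; rewrite -NoutI; exact: hl.
have sB : \sum_(u in U) #|[set w in U | e w u]| =
          \sum_(u in U) #|[set w in U | e u w]|.
  under eq_bigr do rewrite card_filter.
  rewrite exchange_big /=.
  by apply: eq_bigr => u _; rewrite card_filter.
have hnb u : #|nbr u| <= #|[set w in U | e u w]| + #|[set w in U | e w u]|.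
  apply: leq_trans (leq_card_setU _ _).
  apply: subset_leq_card; apply/subsetP => w; rewrite !inE.
  by case/andP => -> /andP[_ ->].
have [u /andP [uU hu] | hnone] := pickP [pred u in U | #|nbr u| <= 2 * t].
  pose U2 := U :\: (u |: nbr u).
  have unb : u \notin nbr u by rewrite inE eqxx andbF.
  have sub1 : u |: nbr u \subset U.
    apply/subsetP => w; rewrite !inE; case/orP => [/eqP -> // | /andP[] //].
  have cU2 : #|U| = #|U2| + (#|nbr u|).+1.
    rewrite /U2 cardsD (setIidPr sub1) cardsU1 unb.
    have := subset_leq_card sub1; rewrite cardsU1 unb; lia.
  have [I2 sI2 [iI2 cI2]] : exists2 I2 : {set V}, I2 \subset U2 &
      independent e I2 /\ #|U2| <= #|I2| * (2 * t + 1).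
    apply: IH; first lia.
    move=> v; apply: leq_trans (hl v); apply: subset_leq_card.
    by apply: setIS; apply: subsetDl.
  have uI2 : u \notin I2.
    apply/negP => /(subsetP sI2); rewrite !inE eqxx; done.
  exists (u |: I2).
    apply/subsetP => w; rewrite in_setU1; case/orP => [/eqP -> // | /(subsetP sI2)].
    by rewrite inE; case/andP.
  split; last by rewrite cardsU1 uI2; lia.
  have key w : w \in I2 -> ~~ (e u w || e w u).
    move=> wI; have wu : (w == u) = false.
      by apply/negbTE; apply/eqP => ew; rewrite -ew wI in uI2.
    move: (subsetP sI2 w wI); rewrite !inE wu /=; case/andP => hn wU.
    by apply/negP => h; move: hn; rewrite wU h.
  move=> x y; rewrite !in_setU1.
  case/orP => [/eqP -> | xI]; case/orP => [/eqP -> | yI] //.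
  - by rewrite eqxx.
  - by move=> _; have := key y yI; rewrite negb_or; case/andP.
  - by move=> _; have := key x xI; rewrite negb_or; case/andP.
  - exact: iI2.
exfalso.
have h1 : \sum_(u in U) (2 * t).+1 <= \sum_(u in U) #|nbr u|.
  apply: leq_sum => u uU; have := hnone u; rewrite /= uU /=; lia.
have h2 : \sum_(u in U) #|nbr u| <= #|U| * t + #|U| * t.
  apply: leq_trans (_ : \sum_(u in U) (#|[set w in U | e u w]| + #|[set w in U | e w u]|) <= _).
    exact: leq_sum.
  by rewrite big_split /= sB; apply: leq_add.
rewrite sum_nat_const in h1.
have : 0 < #|U| by apply/card_gt0P; exists u0.
lia.
Qed.
Local Open Scope ring_scope.
End Cover.

Section MW.
Variables (R : realType) (V : finType) (e : rel V) (W : {set V}) (k r : nat).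
Hypothesis hV : (1 < #|V|)%N.
Hypothesis hkr : (9 * r + 1 <= k)%N.
Hypothesis hmin : forall D : {set V}, dominates e D W -> (k <= #|D|)%N.
Variable D0 : {set V}.
Hypothesis hD0 : dominates e D0 W.

Let L : R := ln (#|V|%:R : R).
Definition Phi (U : {set V}) : R := \sum_v expR (2 * (#|Nout e v :&: U|)%:R).

Lemma L_gt0 : 0 < L.
Proof. by apply: ln_gt0; rewrite ltr1n. Qed.

Lemma card_NoutU1 v x (U : {set V}) : x \notin U ->
  #|Nout e v :&: (x |: U)| = (e v x + #|Nout e v :&: U|)%N.
Proof.
move=> xU.
case hx: (e v x) => /=.
  have -> : Nout e v :&: (x |: U) = x |: (Nout e v :&: U).
    apply/setP => y; rewrite !inE; case: (y =P x) => [-> | _] /=; by rewrite ?hx.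
  by rewrite cardsU1 inE (negbTE xU) andbF.
rewrite (_ : Nout e v :&: (x |: U) = Nout e v :&: U) //.
apply/setP => y; rewrite !inE; case: (y =P x) => [-> | _] /=.
  by rewrite hx (negbTE xU).
by [].
Qed.

Lemma Phi_step (U : {set V}) x : x \notin U ->
  Phi (x |: U) = Phi U + (expR 2 - 1) *
     \sum_(v | e v x) expR (2 * (#|Nout e v :&: U|)%:R).
Proof.
move=> xU; rewrite /Phi mulr_sumr [X in _ + X]big_mkcond /= -big_split /=.
apply: eq_bigr => v _; rewrite card_NoutU1 //.
case: (e v x) => /=; last by rewrite add0n addr0.
rewrite natrD mulrDr mulr1 expRD; ring.
Qed.

Lemma mw_main (j : nat) : (j <= r)%N ->
  exists U : {set V}, [/\ U \subset W, #|U| = j &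
     Phi U <= #|V|%:R * expR (8 * L / (k - r - 1)%:R * j%:R)].
Proof.
elim: j => [_ | j IH hj].
  exists set0; split => //; first exact: sub0set; first by rewrite cards0.
  rewrite mulr0 expR0 mulr1 /Phi.
  apply: (@le_trans _ _ (\sum_(v : V) (1 : R))); last by rewrite sumr_const.
  apply: ler_sum => v _.
  by rewrite (_ : Nout e v :&: set0 = set0) ?setI0 // cards0 mulr0 expR0.
have [U [sUW cU hPhi]] := IH (ltnW hj).
set b := 8 * L / (k - r - 1)%:R.
have hK1 : (0 < k - j - 2)%N by lia.
have hK2 : (0 < k - r - 1)%N by lia.
have hK12 : (k - r - 1 <= k - j - 2)%N by lia.
set a := L / (k - j - 2)%:R.
have Lgt0 := L_gt0.
have a_gt0 : 0 < a by apply: divr_gt0; rewrite ?ltr0n.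
have hab : 8 * a <= b.
  rewrite /b /a -mulrA; apply: ler_wpM2l => //; apply: ler_wpM2l; first exact: ltW.
  by rewrite lef_pV2 ?posrE ?ltr0n // ler_nat.
pose w := fun v : V => expR (2 * (#|Nout e v :&: U|)%:R : R).
set W' := W :\: U.
case: (boolP [exists x in W', \sum_(v | e v x) w v <= a * Phi U]).
  case/exists_inP => x xW' hx.
  have xU : x \notin U by move: xW'; rewrite inE; case/andP.
  have xW : x \in W by move: xW'; rewrite inE; case/andP.
  exists (x |: U); split.
  - apply/subsetP => y; rewrite in_setU1; case/orP => [/eqP -> // | /(subsetP sUW) //].
  - by rewrite cardsU1 xU cU.
  rewrite Phi_step //.
  have e2 : expR 2 - 1 <= 8 :> R.
    have -> : expR (2 : R) = expR 1 ^+ 2 by rewrite -expRM_natl mulr1.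
    have h3 := expR1_le3 R; have h0 := expR_ge0 (1 : R).
    rewrite expr2; nra.
  have s0 : 0 <= \sum_(v | e v x) w v by apply: sumr_ge0 => v _; exact: expR_ge0.
  have P0 : 0 <= Phi U by apply: sumr_ge0 => v _; exact: expR_ge0.
  have hb := expR_ge1Dx b.
  apply: (@le_trans _ _ (Phi U * expR b)).
    apply: (@le_trans _ _ (Phi U * (1 + b))); last by apply: ler_wpM2l.
    rewrite -/w.
    apply: (@le_trans _ _ (Phi U + 8 * (a * Phi U))).
      have e2' : 0 <= expR 2 - 1 :> R by have := expR_ge1Dx (2 : R); lra.
      by rewrite lerD2l; apply: ler_pM.
    rewrite mulrDr mulr1 lerD2l mulrA mulrC; apply: ler_wpM2l => //.
  rewrite -addn1 natrD mulrDr mulr1 expRD mulrA.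
  by apply: ler_wpM2r; first exact: expR_ge0.
rewrite negb_exists_in => /forall_inP hall.
have hs : forall x, x \in W' -> a * (\sum_v w v) <= \sum_(v | e v x) w v.
  by move=> x xW'; have := hall x xW'; rewrite -ltNge => /ltW.
have [D' [domD' cD']] := @cover_lemma R V e w W' a (ltnW hV)
   (fun v => expR_gt0 _) a_gt0 hs.
have La : ln (#|V|%:R : R) / a = (k - j - 2)%:R.
  rewrite /a -/L; field; apply/andP; split; first by rewrite pnatr_eq0 -lt0n.
  exact: lt0r_neq0.
rewrite La -(natrD _ _ 1) ler_nat in cD'.
pose f u := odflt u [pick d in D0 | e d u].
have domD : dominates e (D' :|: f @: U) W.
  move=> x xW; case xU: (x \in U).
    exists (f x).
      by rewrite inE; apply/orP; right; apply: imset_f.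
    rewrite /f; case: pickP => [d /andP [_ hd] // | hnone].
    have [d dD hd] := hD0 x xW.
    by move: (hnone d); rewrite dD hd.
  have [d dD hd] : exists2 d, d \in D' & e d x.
    by apply: domD'; rewrite inE xU xW.
  by exists d; rewrite // inE dD.
have := hmin _ domD.
have := leq_card_setU D' (f @: U).
have := leq_imset_card f U.
rewrite cU => h1 [h2 _] h3; exfalso; lia.
Qed.

End MW.

Theorem lemma8 (R : realType) (V : finType) (e : rel V) (W : {set V}) (k : nat)
  (hn : (2 < #|V|)%N)
  (hk : min_dom_size e W k) :
  exists U : {set V},
    [/\ U \subset W, independent e U,
        (k%:R / (50 * ln (#|V|%:R : R)) <= #|U|%:R)
      & forall v : V, (#|Nout e v :&: U|%:R : R) <= ln (#|V|%:R : R)].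
Proof.
case: hk => [[D0 [hD0 _]] hmin].
set L := ln (#|V|%:R : R).
have npos : (0 : R) < #|V|%:R by rewrite ltr0n; lia.
have L1 : 1 <= L.
  rewrite /L -{1}(expRK (1 : R)) ler_ln ?posrE ?expR_gt0 //.
  apply: le_trans (expR1_le3 R) _.
  by rewrite ler_nat.
have L0 : 0 < L by lra.
have [hk22 | hk23] := leqP k 22.
  case: (posnP k) => [k0 | kpos].
    exists set0; split.
    - exact: sub0set.
    - by move=> u v; rewrite inE.
    - by rewrite k0 cards0 mul0r.
    - by move=> v; rewrite setI0 cards0; lra.
  have [W0 | [w0 w0W]] := set_0Vmem W.
    have : dominates e set0 W by move=> x; rewrite W0 inE.
    by move/hmin; rewrite cards0; lia.
  exists [set w0]; split.
  - by rewrite sub1set.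
  - by move=> u v; rewrite !inE => /eqP -> /eqP ->; rewrite eqxx.
  - rewrite cards1 ler_pdivrMr ?mulr_gt0 // mul1r.
    apply: (@le_trans _ _ 50); last by lra.
    by rewrite ler_nat; lia.
  - move=> v; apply: (@le_trans _ _ 1) => //.
    by rewrite (_ : (1 : R) = 1%:R) // ler_nat -(cards1 w0) subset_leq_card // subsetIr.
pose r := (k %/ 10)%N.
have hkr : (9 * r + 1 <= k)%N by rewrite /r; lia.
have hkr2 : (k <= 10 * r + 9)%N by rewrite /r; lia.
have hr2 : (2 <= r)%N by rewrite /r; lia.
have [U [sUW cU hPhi]] := @mw_main R V e W k r (ltnW hn) hkr hmin D0 hD0 r (leqnn r).
have brL : 8 * L / (k - r - 1)%:R * r%:R <= L.
  rewrite mulrAC ler_pdivrMr ?ltr0n; last lia.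
  rewrite mulrAC [X in _ <= X]mulrC ler_pM2r //.
  by rewrite -natrM ler_nat; lia.
have load : forall v, (#|Nout e v :&: U|%:R : R) <= L.
  move=> v.
  have h1 : expR (2 * (#|Nout e v :&: U|)%:R) <= @Phi R V e U.
    rewrite /Phi (bigD1 v) //= lerDl.
    by apply: sumr_ge0 => i _; exact: expR_ge0.
  have h2 : @Phi R V e U <= expR (2 * L).
    apply: le_trans hPhi _.
    rewrite mulrC -{2}(lnK (x := #|V|%:R : R)) ?posrE // -/L -expRD ler_expR.
    lra.
  have := le_trans h1 h2; rewrite ler_expR; lra.
pose t := (\max_(v : V) #|Nout e v :&: U|)%N.
have tL : (t%:R : R) <= L.
  have V0 : (0 < #|V|)%N by lia.
  have [v0 hv0] := @bigop.eq_bigmax V (fun v => #|Nout e v :&: U|) V0.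
  rewrite /t hv0.
  exact: load.
have [I sIU [iI cI]] := @degen V e t U (fun v => @leq_bigmax V (fun v => #|Nout e v :&: U|) v).
exists I; split.
- exact: subset_trans sIU sUW.
- exact: iI.
- have cIR : (r%:R : R) <= #|I|%:R * (2 * t%:R + 1).
    by rewrite -cU; move: cI; rewrite -(ler_nat R) natrM natrD natrM.
  have kR : (k%:R : R) <= 10 * r%:R + 9.
    by rewrite (_ : (9 : R) = 9%:R) // -natrM -natrD ler_nat.
  have I1 : (1 : R) <= #|I|%:R.
    rewrite (_ : (1 : R) = 1%:R) // ler_nat.
    have : (r <= #|I| * (2 * t + 1))%N by rewrite -cU.
    case: #|I| => //=; lia.
  have t0 : (0 : R) <= t%:R by exact: ler0n.
  rewrite ler_pdivrMr ?mulr_gt0 //.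
  have h3 : #|I|%:R * (2 * t%:R + 1) <= #|I|%:R * (2 * L + 1) :> R.
    by apply: ler_wpM2l; [lra | lra].
  nra.
- move=> v; apply: le_trans (load v).
  by rewrite ler_nat; apply: subset_leq_card; apply: setIS.
Qed.
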